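(* Let $\Gamma$ be a finite metric tree and let $f\colon\Gamma\to[0,\infty)$ be a continuous edge-linear function. If $f=\sum_\alpha f_\alpha$ is a unimodal decomposition of $f$, then there is a unimodal decomposition $f=\sum_\alpha g_\alpha$ with the same number of components in which every component $g_\alpha$ is edge-linear.
   Context: A finite metric tree $\Gamma$ is a compact contractible 1-dimensional metric space stratified into finitely many vertices and open edges. A function is edge-linear if its restriction to each edge is affine with respect to the edge's metric. A continuous function $u\colon\Gamma\to[0,\infty)$ with maximal value $M$ is unimodal if its upper excursion sets $u^{-1}([c,\infty))$ are contractible for all $0<c\le M$ (and empty for $c>M$). A unimodal decomposition of $f$ is a finite family of unimodal functions whose pointwise sum is $f$. *)

(* Defs.v *)
From HB Require Import structures.
From mathcomp Require Import all_boot all_order all_algebra.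
From mathcomp Require Import all_classical all_reals all_analysis.
Unset Printing Implicit Defensive.
Import Order.TTheory GRing.Theory Num.Theory.
Import numFieldNormedType.Exports.
Local Open Scope classical_set_scope.
Local Open Scope ring_scope.

(* A combinatorial tree on the vertex set 'I_n (n > 0): a symmetric,
   irreflexive, connected edge relation with exactly n-1 (undirected) edges,
   i.e. 2(n-1) ordered pairs. *)
Definition is_tree (n : nat) (E : rel 'I_n) : Prop :=
  (0 < n)%N /\ symmetric E /\ irreflexive E /\
  (forall i j, connect E i j) /\
  #|[set p : 'I_n * 'I_n | E p.1 p.2]| = (2 * n.-1)%N.

Definition bvec (R : realType) (n : nat) (i : 'I_n) : 'rV[R]_n :=
  \row_k (k == i)%:R.

(* The point of the edge {i,j} at parameter t in [0,1] (affine in t, hence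
   affine in the arclength coordinate of the edge, whatever its length). *)
Definition edge_pt (R : realType) (n : nat) (i j : 'I_n) (t : R) : 'rV[R]_n :=
  (1 - t) *: bvec R n i + t *: bvec R n j.

(* The geometric realization Gamma of the tree inside 'rV[R]_n, with the
   subspace topology (which is the topology of the metric tree). *)
Definition realization (R : realType) (n : nat) (E : rel 'I_n) : set 'rV[R]_n :=
  [set x | (exists i, x = bvec R n i) \/
           (exists i j, E i j /\ exists t, 0 <= t <= 1 /\ x = edge_pt R n i j t)].

Definition contractible (R : realType) (T : topologicalType) (A : set T) : Prop :=
  exists x0, A x0 /\
  exists H : T * R -> T,
    {within A `*` [set t : R | 0 <= t <= 1], continuous H} /\
    (forall x t, A x -> 0 <= t <= 1 -> A (H (x, t))) /\
    (forall x, A x -> H (x, 0) = x /\ H (x, 1) = x0).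

Definition unimodal (R : realType) (n : nat) (E : rel 'I_n) (u : 'rV[R]_n -> R) : Prop :=
  let G := realization R n E in
  {within G, continuous u} /\ (forall x, G x -> 0 <= u x) /\
  exists M, (exists x, G x /\ u x = M) /\ (forall x, G x -> u x <= M) /\
    (forall c, 0 < c <= M -> contractible R 'rV[R]_n [set x | G x /\ c <= u x]) /\
    (forall c, M < c -> [set x | G x /\ c <= u x] = set0).

Definition edge_linear (R : realType) (n : nat) (E : rel 'I_n) (u : 'rV[R]_n -> R) : Prop :=
  forall i j, E i j -> exists a b : R,
    forall t, 0 <= t <= 1 -> u (edge_pt R n i j t) = a + b * t.

Definition unimodal_decomposition (R : realType) (n : nat) (E : rel 'I_n)
  (f : 'rV[R]_n -> R) (k : nat) (fs : 'I_k -> 'rV[R]_n -> R) : Prop :=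
  (forall a, unimodal R n E (fs a)) /\
  (forall x, realization R n E x -> f x = \sum_(a < k) fs a x).

(* Main.v *)
Require Import Defs.
From HB Require Import structures.
From mathcomp Require Import all_boot all_order all_algebra.
From mathcomp Require Import all_classical all_reals all_analysis.
From mathcomp Require Import zify ring lra.
Import Order.TTheory GRing.Theory Num.Theory.
Import numFieldNormedType.Exports.
Set Implicit Arguments. Unset Strict Implicit. Unset Printing Implicit Defensive.

Section Tree.
Variables (n : nat) (E : rel 'I_n).
Hypothesis Esym : symmetric E.
Hypothesis Eirr : irreflexive E.
Hypothesis Econn : forall i j, connect E i j.
Hypothesis Ecard : #|[set p : 'I_n * 'I_n | E p.1 p.2]| = (2 * n.-1)%N.
Variable r : 'I_n.

Definition haspath (v : 'I_n) (k : nat) : bool :=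
  `[< exists s, size s = k /\ path E r s /\ last r s = v >].

Lemma haspath_ex v : exists k, haspath v k.
Proof.
have /connectP [s ps ->] := Econn r v.
by exists (size s); apply/asboolP; exists s.
Qed.

Definition dep v := ex_minn (haspath_ex v).

Lemma dep_min v k : haspath v k -> (dep v <= k)%N.
Proof. by rewrite /dep; case: ex_minnP => m _ H /H. Qed.

Lemma dep_has v : haspath v (dep v).
Proof. by rewrite /dep; case: ex_minnP. Qed.

Lemma dep_r : dep r = 0%N.
Proof.
apply/eqP; rewrite -leqn0; apply: dep_min; apply/asboolP; by exists [::].
Qed.

Lemma dep0 v : dep v = 0%N -> v = r.
Proof.
move=> h; have /asboolP [s [sz [_ ls]]] := dep_has v.
by move: sz ls; rewrite h; case: s.
Qed.

Lemma dep_edge u v : E u v -> (dep v <= (dep u).+1)%N.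
Proof.
move=> euv; apply: dep_min; have /asboolP [s [sz [ps ls]]] := dep_has u.
apply/asboolP; exists (rcons s v); rewrite size_rcons sz last_rcons rcons_path ps ls.
by split.
Qed.

Lemma dep_parent v : v != r -> exists u, E u v /\ (dep u).+1 = dep v.
Proof.
move=> vr; have /asboolP [s [sz [ps ls]]] := dep_has v.
case/lastP: s sz ps ls => [|s x]; first by move=> _ _ /= h; rewrite h eqxx in vr.
rewrite size_rcons last_rcons rcons_path => sz /andP [ps ex] xv.
exists (last r s); split; first by rewrite -xv.
have h1 : (dep (last r s) <= size s)%N by apply: dep_min; apply/asboolP; exists s.
have h2 := dep_edge ex; rewrite xv in h2; lia.
Qed.

Definition par v := if v == r then r else
  odflt r [pick u | E u v && ((dep u).+1 == dep v)].

Lemma par_r : par r = r.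
Proof. by rewrite /par eqxx. Qed.

Lemma par_spec v : v != r -> E (par v) v /\ (dep (par v)).+1 = dep v.
Proof.
move=> vr; rewrite /par (negbTE vr); case: pickP => [u /andP [e /eqP d]|h] //=.
by have [u [e d]] := dep_parent vr; move: (h u); rewrite e d eqxx.
Qed.

Lemma dep_par v : dep (par v) = (dep v).-1.
Proof.
have [->|vr] := eqVneq v r; first by rewrite par_r dep_r.
by have [_ <-] := par_spec vr.
Qed.

Lemma par_neq v : v != r -> par v != v.
Proof.
move=> vr; have [_ d] := par_spec vr; apply/eqP => h; rewrite h in d; lia.
Qed.

Lemma tree_edge i j : E i j ->
  (i != r /\ j = par i) \/ (j != r /\ i = par j).
Proof.
move=> eij.
pose A := [set (v, par v) | v in [set~ r]].
pose B := [set (par v, v) | v in [set~ r]].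
pose S := [set p : 'I_n * 'I_n | E p.1 p.2].
have sub : A :|: B \subset S.
  apply/fintype.subsetP => q; rewrite inE => /orP [] /finset.imsetP [v]; rewrite !inE => vr -> /=;
  have [e _] := par_spec vr; by rewrite // Esym.
have cA : #|A| = n.-1.
  rewrite card_in_imset; first by rewrite cardsC1 card_ord.
  by move=> v w _ _ [].
have cB : #|B| = n.-1.
  rewrite card_in_imset; first by rewrite cardsC1 card_ord.
  by move=> v w _ _ [].
have dis : A :&: B = finset.set0.
  apply/finset.setP => q; rewrite !inE; apply/negbTE/negP => /andP [/finset.imsetP [v]];
  rewrite !inE => vr -> /finset.imsetP [w]; rewrite !inE => wr [e1 e2].
  have [_ d1] := par_spec vr; have [_ d2] := par_spec wr.
  rewrite -e1 in d2; rewrite e2 in d1; lia.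
have cU : #|A :|: B| = #|S|.
  by rewrite Ecard cardsU dis finset.cards0 cA cB subn0; lia.
have eq : A :|: B = S by apply/eqP; rewrite eqEcard sub cU leqnn.
have : (i, j) \in S by rewrite inE.
rewrite -eq inE => /orP [] /finset.imsetP [v]; rewrite !inE => vr [-> ->].
  by left.
by right.
Qed.

Definition anc (u z : 'I_n) : Prop := exists k, iter k par z = u.

Lemma dep_iter k z : dep (iter k par z) = (dep z - k)%N.
Proof. elim: k => [|k IH]; first by rewrite subn0. by rewrite iterS dep_par IH subnS. Qed.

Lemma anc_refl z : anc z z.
Proof. by exists 0%N. Qed.

Lemma anc_par u z : anc u (par z) -> anc u z.
Proof. by move=> [k <-]; exists k.+1; rewrite iterSr. Qed.

Lemma anc_step u z : z != r -> anc u z -> u != z -> anc u (par z).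
Proof.
move=> zr [[|k] <-]; first by rewrite eqxx.
by move=> _; exists k; rewrite iterSr.
Qed.

Lemma anc_not_par z : z != r -> ~ anc z (par z).
Proof.
move=> zr [k h]; have := dep_iter k (par z); rewrite h dep_par => d.
have d0 : dep z = 0%N by lia.
by move/dep0: d0 => zr'; rewrite zr' eqxx in zr.
Qed.

Lemma iter_par_r k : iter k par r = r.
Proof. by elim: k => // k IH; rewrite iterS IH par_r. Qed.

Lemma anc_r v : v != r -> ~ anc v r.
Proof. by move=> vr [k]; rewrite iter_par_r => h; rewrite h eqxx in vr. Qed.

Lemma dep_pos v : v != r -> (0 < dep v)%N.
Proof. by move=> vr; rewrite lt0n; apply/eqP => /dep0 h; rewrite h eqxx in vr. Qed.

End Tree.

Local Open Scope classical_set_scope.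
Local Open Scope ring_scope.

Section Lin.
Variables (R : realType) (n : nat).
Local Notation e := (bvec R n).

Definition Lw (w : 'I_n -> R) (x : 'rV[R]_n) : R := \sum_z x ord0 z * w z.

Lemma e_coord i z : e i ord0 z = (z == i)%:R.
Proof. by rewrite /bvec mxE. Qed.

Lemma Lw_e w i : Lw w (e i) = w i.
Proof.
rewrite /Lw (bigD1 i) //= e_coord eqxx mul1r big1 ?addr0 // => z zi.
by rewrite e_coord (negbTE zi) mul0r.
Qed.

Lemma Lw_lin w a b x y : Lw w (a *: x + b *: y) = a * Lw w x + b * Lw w y.
Proof.
rewrite /Lw !mulr_sumr -big_split; apply: eq_bigr => z _.
rewrite !mxE mulrDl !mulrA.
by [].
Qed.

Lemma Lw_edge w i j t : Lw w (edge_pt R n i j t) = (1 - t) * w i + t * w j.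
Proof. by rewrite /edge_pt Lw_lin !Lw_e. Qed.

Lemma Lw_cont w : continuous (Lw w).
Proof.
move=> x; rewrite /Lw.
pose P := fun (F : 'rV[R]_n -> R) => {for x, continuous F}.
have -> : (fun y : 'rV[R]_n => \sum_z y ord0 z * w z) = \sum_z (fun y : 'rV[R]_n => y ord0 z * w z).
  by apply/funext => y; rewrite fct_sumE.
apply: (big_ind P) => //.
- exact: cst_continuous.
- by move=> F1 F2; apply: continuousD.
- move=> z _; apply: continuousM; last exact: cst_continuous.
  exact: coord_continuous.
Qed.

Lemma edge_pt0 i j : edge_pt R n i j 0 = e i.
Proof. by rewrite /edge_pt subr0 scale1r scale0r addr0. Qed.
Lemma edge_pt1 i j : edge_pt R n i j 1 = e j.
Proof. by rewrite /edge_pt subrr scale0r scale1r add0r. Qed.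

End Lin.
Arguments Lw {R n} w x.

Section Aux.
Variable (R : realType).
Definition ind (P : Prop) : R := if `[< P >] then 1 else 0.
Definition clamp (y : R) : R := Num.min (Num.max y 0) 1.

Lemma indT (P : Prop) : P -> ind P = 1.
Proof. by rewrite /ind => h; case: asboolP. Qed.
Lemma indF (P : Prop) : ~ P -> ind P = 0.
Proof. by rewrite /ind => h; case: asboolP. Qed.
Lemma ind01 P : ind P = 0 \/ ind P = 1.
Proof. by rewrite /ind; case: asboolP; [right|left]. Qed.

Lemma clamp_ge0 y : 0 <= clamp y.
Proof. by rewrite /clamp le_min ler01 andbT le_max lexx orbT. Qed.
Lemma clamp_le1 y : clamp y <= 1.
Proof. by rewrite /clamp ge_min lexx orbT. Qed.
Lemma clamp1 y : 1 <= y -> clamp y = 1.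
Proof.
move=> h; rewrite /clamp (@max_l _ _ y 0); last by lra.
exact: min_r.
Qed.
Lemma clamp0 y : y <= 0 -> clamp y = 0.
Proof.
move=> h; rewrite /clamp (@max_r _ _ y 0) //; exact: min_l.
Qed.

Lemma min_ind P c : 0 <= c <= 1 -> Num.min (ind P) c = ind P * c.
Proof.
move=> /andP [c0 c1]; case: (ind01 P) => ->; rewrite ?mul0r ?mul1r.
  exact: min_l.
exact: min_r.
Qed.

Lemma comb_eq n (a b : 'rV[R]_n) l : a + l *: (b - a) = (1 - l) *: a + l *: b.
Proof. by apply/rowP => k; rewrite !mxE; ring. Qed.
End Aux.
Arguments clamp {R} y.

Section Geo.
Variables (R : realType) (n : nat) (E : rel 'I_n).
Hypothesis Esym : symmetric E.
Hypothesis Eirr : irreflexive E.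
Hypothesis Econn : forall i j, connect E i j.
Hypothesis Ecard : #|[set p : 'I_n * 'I_n | E p.1 p.2]%SET| = (2 * n.-1)%N.
Variable r : 'I_n.
Local Notation e := (bvec R n).
Local Notation p := (par Econn r).
Local Notation d := (dep Econn r).
Local Notation anc := (anc Econn r).
Local Notation G := (realization R n E).

Definition vec u := e u - e (p u).
Definition Pt z (tau : R) := e r +
  \sum_(u | u != r) (ind R (anc u z) * clamp (tau - (d u)%:R + 1)) *: vec u.
Definition Au u (x : 'rV[R]_n) := Lw (fun z => ind R (anc u z)) x.
Definition Kc : R := (\big[maxn/0%N]_(u : 'I_n) d u)%:R.
Definition Hm (q : 'rV[R]_n * R) := e r +
  \sum_(u | u != r) Num.min (Au u q.1) (clamp (Kc * (1 - q.2) - (d u)%:R + 1)) *: vec u.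

Lemma sum_pick (F : 'I_n -> 'rV[R]_n) z : z != r ->
  \sum_(u | u != r) (u == z)%:R *: F u = F z.
Proof.
move=> zr; rewrite (bigD1 z) //= eqxx scale1r big1 ?addr0 // => u /andP [_ uz].
by rewrite (negbTE uz) scale0r.
Qed.

Lemma ind_step u z : z != r ->
  ind R (anc u z) = ind R (anc u (p z)) + (u == z)%:R.
Proof.
move=> zr; have [->|uz] := eqVneq u z.
  rewrite (@indT _ (anc z z)); last exact: anc_refl.
  rewrite (@indF _ (anc z (p z))) ?eqxx ?add0r //; exact: anc_not_par.
rewrite addr0 /ind; congr (if _ then _ else _); apply: asbool_equiv_eq; split.
  by move=> h; apply: anc_step.
exact: anc_par.
Qed.

Lemma Pt_r tau : Pt r tau = e r.
Proof.
rewrite /Pt big1 ?addr0 // => u ur.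
by rewrite indF ?mul0r ?scale0r //; apply: anc_r.
Qed.

Lemma Pt_step z tau : z != r ->
  Pt z tau = Pt (p z) tau + clamp (tau - (d z)%:R + 1) *: vec z.
Proof.
move=> zr; rewrite /Pt.
under eq_bigr => u _ do rewrite (ind_step u zr) mulrDl scalerDl.
rewrite big_split /= addrA; congr (_ + _).
under eq_bigr => u _ do rewrite -scalerA.
exact: sum_pick.
Qed.

Lemma dep_par_lt z : z != r -> (d (p z)).+1 = d z.
Proof. by move=> zr; have [_ ->] := par_spec Econn Ecard zr. Qed.

Lemma Pt_big tau z : (d z)%:R <= tau -> Pt z tau = e z.
Proof.
move: {2}(d z) (leqnn (d z)) => m; elim: m z => [|m IH] z hm hz.
  have /dep0 -> : d z = 0%N by lia.
  exact: Pt_r.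
have [->|zr] := eqVneq z r; first exact: Pt_r.
rewrite Pt_step // IH; last 2 first.
- by have := dep_par_lt zr; lia.
- apply: le_trans hz; rewrite ler_nat; have := dep_par_lt zr; lia.
rewrite clamp1; last by lra.
by rewrite scale1r /vec addrC subrK.
Qed.

Lemma Pt_zero z : Pt z 0 = e r.
Proof.
rewrite /Pt big1 ?addr0 // => u ur.
rewrite clamp0 ?mulr0 ?scale0r //.
have := dep_pos Econn ur => h.
have : (1 <= (d u)%:R :> R) by rewrite ler1n.
lra.
Qed.


Lemma G_cases x : G x -> (exists z, x = e z) \/
  (exists u0 s, u0 != r /\ 0 <= s <= 1 /\ x = (1 - s) *: e (p u0) + s *: e u0).
Proof.
case=> [[z ->]|[i [j [eij [t [/andP [t0 t1] ->]]]]]]; first by left; exists z.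
right; case: (tree_edge Esym Econn Ecard r eij) => [[ir ->]|[jr ->]].
  exists i, (1 - t); split => //; split; first by apply/andP; lra.
  by apply/rowP => k; rewrite !mxE; ring.
exists j, t; split => //; split; first by apply/andP; lra.
by [].
Qed.

Lemma G_e z : G (e z).
Proof. by left; exists z. Qed.

Lemma G_edge u0 l : u0 != r -> 0 <= l <= 1 -> G ((1 - l) *: e (p u0) + l *: e u0).
Proof.
move=> ur hl; right; exists (p u0), u0; split; first by have [] := par_spec Econn Ecard ur.
by exists l; split.
Qed.

Lemma Lw_comb w a b l : Lw w ((1 - l) *: e a + l *: e b) = (1 - l) * w a + l * w b.
Proof. by rewrite Lw_lin !Lw_e. Qed.

Variable w : 'I_n -> R.
Hypothesis wmono : forall v, v != r -> w v <= w (p v).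

Lemma Pt_in tau z : 0 <= tau -> G (Pt z tau) /\ w z <= Lw w (Pt z tau).
Proof.
move=> tau0.
move: {2}(d z) (leqnn (d z)) => m; elim: m z => [|m IH] z hm.
  have /dep0 -> : d z = 0%N by lia.
  by rewrite Pt_r Lw_e; split; [exact: G_e|].
have [hz|hz] := lerP (d z)%:R tau.
  by rewrite Pt_big // Lw_e; split; [exact: G_e|].
have zr : z != r.
  by apply/eqP => zr; move: hz; rewrite zr dep_r; lra.
have hd := dep_par_lt zr.
have [hpz|hpz] := lerP (d (p z))%:R tau.
  rewrite Pt_step // Pt_big // /vec comb_eq.
  have c0 := clamp_ge0 (tau - (d z)%:R + 1).
  have c1 := clamp_le1 (tau - (d z)%:R + 1).
  split; first by apply: G_edge => //; apply/andP.
  rewrite Lw_comb; have := wmono zr; nra.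
rewrite Pt_step // clamp0 ?scale0r ?addr0; last first.
  have : (d z)%:R = (d (p z))%:R + 1 :> R by rewrite -hd -addn1 natrD.
  lra.
have [h1 h2] := IH (p z) ltac:(lia).
by split => //; apply: le_trans (wmono zr) h2.
Qed.

Lemma Au_e u z : Au u (e z) = ind R (anc u z).
Proof. by rewrite /Au Lw_e. Qed.

Lemma Hm_vertex z t : Hm (e z, t) = Pt z (Kc * (1 - t)).
Proof.
rewrite /Hm /Pt /=; congr (_ + _); apply: eq_bigr => u _; congr (_ *: _).
rewrite Au_e min_ind //; apply/andP; split; [exact: clamp_ge0|exact: clamp_le1].
Qed.

Lemma Hm_edge u0 s t : u0 != r ->
  Hm ((1 - s) *: e (p u0) + s *: e u0, t) =
  Pt (p u0) (Kc * (1 - t)) +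
    Num.min s (clamp (Kc * (1 - t) - (d u0)%:R + 1)) *: vec u0.
Proof.
move=> ur; rewrite /Hm /Pt /= -addrA; congr (_ + _).
set tau := Kc * (1 - t).
transitivity (\sum_(u | u != r)
  ((ind R (anc u (p u0)) * clamp (tau - (d u)%:R + 1)) *: vec u +
   (u == u0)%:R *: (Num.min s (clamp (tau - (d u)%:R + 1)) *: vec u))).
  apply: eq_bigr => u _.
  have hc : 0 <= clamp (tau - (d u)%:R + 1) <= 1.
    by apply/andP; split; [exact: clamp_ge0|exact: clamp_le1].
  rewrite /Au Lw_comb (ind_step u ur).
  have [->|uu] := eqVneq u u0.
    rewrite (@indF _ (anc u0 (p u0))); last exact: anc_not_par.
    by rewrite /= mulr1n mul0r scale0r add0r scale1r mulr0 add0r add0r mulr1.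
  rewrite /= mulr0n scale0r !addr0.
  have -> : (1 - s) * ind R (anc u (p u0)) + s * ind R (anc u (p u0)) = ind R (anc u (p u0)) by ring.
  by rewrite min_ind.
by rewrite big_split /= sum_pick.
Qed.

Lemma Kc_ge u : (d u)%:R <= Kc.
Proof. by rewrite /Kc ler_nat; exact: (leq_bigmax u). Qed.

Lemma Kc_ge0 : 0 <= Kc.
Proof. by rewrite /Kc ler0n. Qed.

Lemma Hm_in c x t : G x -> c <= Lw w x -> 0 <= t <= 1 ->
  G (Hm (x, t)) /\ c <= Lw w (Hm (x, t)).
Proof.
move=> Gx cx /andP [t0 t1].
have tau0 : 0 <= Kc * (1 - t) by apply: mulr_ge0; [exact: Kc_ge0|lra].
case: (G_cases Gx) => [[z xz]|[u0 [s [ur [/andP [s0 s1] xe]]]]].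
  rewrite xz Hm_vertex; have [h1 h2] := Pt_in z tau0.
  by split => //; apply: le_trans h2; rewrite -(Lw_e w z) -xz.
rewrite xe Hm_edge //; rewrite xe Lw_comb in cx.
set tau := Kc * (1 - t) in tau0 *.
have wm := wmono ur.
have hd := dep_par_lt ur.
have [hpz|hpz] := lerP (d (p u0))%:R tau.
  rewrite Pt_big // /vec comb_eq.
  set mu := Num.min s _.
  have mu0 : 0 <= mu by rewrite /mu le_min s0 clamp_ge0.
  have mus : mu <= s by rewrite /mu ge_min lexx.
  split; first by apply: G_edge => //; apply/andP; split => //; lra.
  rewrite Lw_comb; nra.
rewrite clamp0; last first.
  have : (d u0)%:R = (d (p u0))%:R + 1 :> R by rewrite -hd -addn1 natrD.
  lra.
rewrite (@min_r _ _ s 0) // scale0r addr0.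
have [h1 h2] := Pt_in (p u0) tau0.
split => //; nra.
Qed.

Lemma Hm_0 x : G x -> Hm (x, 0) = x.
Proof.
move=> Gx; case: (G_cases Gx) => [[z ->]|[u0 [s [ur [/andP [s0 s1] ->]]]]].
  by rewrite Hm_vertex subr0 mulr1 Pt_big //; exact: Kc_ge.
rewrite Hm_edge // subr0 mulr1 Pt_big; last first.
  by apply: le_trans (Kc_ge (p u0)) _.
rewrite clamp1; last by have := Kc_ge u0; lra.
by rewrite (@min_l _ _ s 1) // /vec comb_eq.
Qed.

Lemma Hm_1 x : G x -> Hm (x, 1) = e r.
Proof.
move=> Gx; case: (G_cases Gx) => [[z ->]|[u0 [s [ur [/andP [s0 s1] ->]]]]].
  by rewrite Hm_vertex subrr mulr0 Pt_zero.
rewrite Hm_edge // subrr mulr0 Pt_zero clamp0; last first.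
  have := dep_pos Econn ur => h.
  have : (1 <= (d u0)%:R :> R) by rewrite ler1n.
  lra.
by rewrite (@min_r _ _ s 0) // scale0r addr0.
Qed.

Lemma clamp_cont : continuous (@clamp R).
Proof.
move=> y; rewrite /clamp.
have h1 : {for y, continuous (fun y : R^o => Num.max y 0)}.
  apply: continuous_max; [exact: cvg_id | exact: cst_continuous].
have := continuous_min h1 (@cst_continuous _ R^o 1 y).
exact.
Qed.

Lemma Hm_cont : continuous Hm.
Proof.
move=> q; rewrite /Hm.
apply: continuousD; first exact: cst_continuous.
have -> : (fun q : 'rV[R]_n * R => \sum_(u | u != r)
    Num.min (Au u q.1) (clamp (Kc * (1 - q.2) - (d u)%:R + 1)) *: vec u) =
  \sum_(u | u != r) (fun q : 'rV[R]_n * R =>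
    Num.min (Au u q.1) (clamp (Kc * (1 - q.2) - (d u)%:R + 1)) *: vec u).
  by apply/funext => y; rewrite fct_sumE.
apply: (big_ind (fun F => {for q, continuous F})).
- exact: cst_continuous.
- by move=> F1 F2; apply: continuousD.
move=> u _.
have hA : {for q, continuous (fun q0 : 'rV[R]_n * R => (Au u q0.1 : R^o))}.
  apply: (@continuous_comp _ _ _ fst (Au u)); first exact: cvg_fst.
  exact: Lw_cont.
have hL : {for q, continuous (fun q0 : 'rV[R]_n * R => (Kc * (1 - q0.2) - (d u)%:R + 1 : R^o))}.
  apply: continuousD; last exact: cst_continuous.
  apply: continuousB; last exact: cst_continuous.
  apply: continuousM; first exact: cst_continuous.
  apply: continuousB; first exact: cst_continuous.
  exact: cvg_snd.
have hC : {for q, continuous (fun q0 : 'rV[R]_n * R => (clamp (Kc * (1 - q0.2) - (d u)%:R + 1) : R^o))}.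
  apply: continuous_comp; first exact: hL.
  exact: clamp_cont.
have hM := continuous_min hA hC.
apply: continuousZr_tmp; exact: hM.
Qed.

End Geo.

Lemma slice_cont (R : realType) (T U : topologicalType) (A : set T) (H : T * R -> U) y :
  {within A `*` [set t : R | 0 <= t <= 1], continuous H} -> A y ->
  {within `[0, 1], continuous (fun t : R => H (y, t))}.
Proof.
move=> hH Ay; apply/subspace_continuousP => t It.
have It' : 0 <= t <= 1 by move: It; rewrite /= in_itv.
have := (subspace_continuousP (A `*` [set t : R | 0 <= t <= 1]) H).1 hH (y, t) (conj Ay It').
move=> h; apply: cvg_trans _ h.
move=> P; rewrite !nbhs_simpl /= => hP.
move: hP; rewrite /within /= => hP.
case: hP => [[U1 V1] /= [nU nV] UV].
apply: filterS nV => s Vs Is.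
have Is' : 0 <= s <= 1 by move: Is; rewrite /= in_itv.
have := UV (y, s) (conj (nbhs_singleton nU) Vs).
by move=> /(_ (conj Ay Is')).
Qed.

Section Geo2.
Variables (R : realType) (n : nat) (E : rel 'I_n).
Hypothesis Esym : symmetric E.
Hypothesis Eirr : irreflexive E.
Hypothesis Econn : forall i j, connect E i j.
Hypothesis Ecard : #|[set p : 'I_n * 'I_n | E p.1 p.2]%SET| = (2 * n.-1)%N.
Variable r : 'I_n.
Local Notation e := (bvec R n).
Local Notation p := (par Econn r).
Local Notation d := (dep Econn r).
Local Notation anc := (anc Econn r).
Local Notation G := (realization R n E).

Definition sig (v z : 'I_n) : R :=
  if `[< anc v z >] then 1 else if z == p v then 0 else -1.

Lemma sig_cases v z : (sig v z = 1 /\ anc v z) \/ (sig v z = 0 /\ z = p v) \/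
  (sig v z = -1 /\ ~ anc v z /\ z != p v).
Proof.
rewrite /sig; case: asboolP => h; first by left.
case: eqVneq => hz; first by right; left.
by right; right.
Qed.

Lemma sig_edge v a b : E a b -> anc v a -> ~ anc v b -> b = p v.
Proof.
move=> eab; case: (tree_edge Esym Econn Ecard r eab) => [[ar ->]|[br ->]] ha hb.
  have [->|av] := eqVneq v a; first by [].
  by exfalso; apply: hb; apply: anc_step.
by exfalso; apply: hb; apply: anc_par.
Qed.

Lemma sig_zero v y : G y -> Lw (sig v) y = 0 -> y = e (p v).
Proof.
case=> [[z ->]|[i [j [eij [t [/andP [t0 t1] ->]]]]]].
  rewrite Lw_e; case: (sig_cases v z) => [[-> _]|[[_ ->]|[-> _]]] h //; exfalso; lra.
rewrite Lw_edge.
case: (sig_cases v i) => [[-> ai]|[[-> ip]|[-> [ai ip]]]];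
case: (sig_cases v j) => [[-> aj]|[[-> jp]|[-> [aj jp]]]] => h.
- exfalso; lra.
- have -> : t = 1 by lra.
  by rewrite edge_pt1 jp.
- by move: jp; rewrite (sig_edge eij ai aj) eqxx.
- have -> : t = 0 by lra.
  by rewrite edge_pt0 ip.
- by move: eij; rewrite ip jp Eirr.
- have -> : t = 0 by lra.
  by rewrite edge_pt0 ip.
- have eji : E j i by rewrite Esym.
  by move: ip; rewrite (sig_edge eji aj ai) eqxx.
- have -> : t = 1 by lra.
  by rewrite edge_pt1 jp.
- exfalso; lra.
Qed.

Lemma contr (w : 'I_n -> R) (c : R) :
  (forall v, v != r -> w v <= w (p v)) -> c <= w r ->
  contractible R 'rV[R]_n [set x | G x /\ c <= Lw w x].
Proof.
move=> wmono cr; exists (e r); split; first by split; [exact: G_e|rewrite Lw_e].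
exists (Hm Econn r); split; first exact/continuous_subspaceT/Hm_cont.
split.
  by move=> x t [Gx cx] ht; apply: (Hm_in Esym Ecard wmono).
move=> x [Gx _]; split; [exact: (Hm_0 Esym Econn Ecard) | exact: (Hm_1 Esym Econn Ecard)].
Qed.

Lemma mono_of_unimodal (f : 'rV[R]_n -> R) : unimodal R n E f ->
  (forall v, f (e v) <= f (e r)) -> forall v, v != r -> f (e v) <= f (e (p v)).
Proof.
move=> [fc [fpos [M [[xM [GxM fxM]] [fleM [fcontr _]]]]]] fmax v vr.
set c := f (e v).
have [c0|c0] := lerP c 0; first by apply: le_trans c0 _; apply: fpos; exact: G_e.
have [pr|pr] := eqVneq (p v) r; first by rewrite pr; apply: fmax.
have cM : c <= M := fleM _ (G_e R E v).
have [x0 [Ax0 [H [Hc [HA Hend]]]]] := fcontr c (ltac:(by apply/andP; split)).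
pose A := [set x | G x /\ c <= f x].
have key : forall y, A y ->
    Num.min (Lw (sig v) (H (y, 0))) (Lw (sig v) (H (y, 1))) <= 0 <=
    Num.max (Lw (sig v) (H (y, 0))) (Lw (sig v) (H (y, 1))) ->
    c <= f (e (p v)).
  move=> y Ay hv.
  have hcont : {within `[0, 1], continuous (fun t => Lw (sig v) (H (y, t)))}.
    apply: (@within_continuous_comp _ _ _ _ (fun t => H (y, t)) (Lw (sig v))).
      by move=> ? _; exact: Lw_cont.
    exact: (@slice_cont R _ _ _ H y Hc Ay).
  have [t0 ht0 hz] := IVT ler01 hcont hv.
  have ht0' : 0 <= t0 <= 1 by move: ht0; rewrite in_itv.
  have [GH cH] := HA y t0 Ay ht0'.
  by rewrite -(sig_zero GH hz).
have Aev : A (e v) by split; [exact: G_e|].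
have Aer : A (e r) by split; [exact: G_e|exact: fmax].
have [h0|h0] := lerP (Lw (sig v) x0) 0.
  apply: (key _ Aev).
  have [-> ->] := Hend _ Aev.
  rewrite Lw_e /sig; case: asboolP => [_|]; last by move: (anc_refl Econn r v).
  by apply/andP; split; [rewrite ge_min h0 orbT | rewrite le_max ler01].
apply: (key _ Aer).
have [-> ->] := Hend _ Aer.
rewrite Lw_e /sig; case: asboolP => [/(anc_r vr)|_] //.
rewrite eq_sym (negbTE pr).
apply/andP; split; first by rewrite ge_min lerN10.
by rewrite le_max (ltW h0) orbT.
Qed.

End Geo2.

Lemma cardE n (E : rel 'I_n) : #|[set p : 'I_n * 'I_n | E p.1 p.2]| = #|[set p : 'I_n * 'I_n | E p.1 p.2]%SET|.
Proof. apply: eq_card => q; rewrite !inE. by apply/idP/idP => [/asboolP|h]; [|apply/asboolP]. Qed.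

Lemma amax (R : realType) n (F : 'I_n -> R) : (0 < n)%N -> exists r, forall v, F v <= F r.
Proof.
case: n F => // n F _; exists [arg max_(i > ord0) F i]%O.
by case: arg_maxP => // i _ h v; apply: h.
Qed.

Lemma Lw_G_bounds (R : realType) n (E : rel 'I_n) (w : 'I_n -> R) (lo hi : R) x :
  realization R n E x -> (forall z, lo <= w z <= hi) -> lo <= Lw w x <= hi.
Proof.
move=> Gx hw; case: Gx => [[z ->]|[i [j [eij [t [/andP [t0 t1] ->]]]]]].
  by rewrite Lw_e.
rewrite Lw_edge; have /andP [a1 a2] := hw i; have /andP [b1 b2] := hw j.
apply/andP; split; nra.
Qed.

Unset Implicit Arguments.

Theorem lemma2p2 (R : realType) (n : nat) (E : rel 'I_n)
  (f : 'rV[R]_n -> R) (k : nat) (fs : 'I_k -> 'rV[R]_n -> R) :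
  is_tree n E ->
  {within realization R n E, continuous f} ->
  (forall x, realization R n E x -> 0 <= f x) ->
  edge_linear R n E f ->
  unimodal_decomposition R n E f k fs ->
  exists gs : 'I_k -> 'rV[R]_n -> R,
    unimodal_decomposition R n E f k gs /\ (forall a, edge_linear R n E (gs a)).
Proof.
move=> [n0 [Esym [Eirr [Econn Ecard0]]]] _ _ flin [fsU fsum].
have Ecard : #|[set p : 'I_n * 'I_n | E p.1 p.2]%SET| = (2 * n.-1)%N.
  by rewrite -cardE.
exists (fun a => Lw (fun z => fs a (bvec R n z))); split; last first.
  move=> a i j _; exists (fs a (bvec R n i)), (fs a (bvec R n j) - fs a (bvec R n i)).
  by move=> t _; rewrite Lw_edge; ring.
split.
  move=> a; set w := (fun z => fs a (bvec R n z)).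
  have [fc [fpos _]] := fsU a.
  have w0 : forall z, 0 <= w z by move=> z; apply: fpos; exact: G_e.
  have [r hr] := @amax R n w n0.
  have wmono := mono_of_unimodal Esym Eirr Econn Ecard (fsU a) hr.
  have hw : forall z, 0 <= w z <= w r by move=> z; rewrite w0 hr.
  split; first exact/continuous_subspaceT/Lw_cont.
  split.
    by move=> x Gx; case/andP: (@Lw_G_bounds R n E w 0 (w r) x Gx hw).
  exists (w r); split; first by exists (bvec R n r); split; [exact: G_e|rewrite Lw_e].
  have hb : forall x, realization R n E x -> Lw w x <= w r.
    by move=> x Gx; case/andP: (@Lw_G_bounds R n E w 0 (w r) x Gx hw).
  split; first exact: hb.
  split.
    move=> c /andP [_ cM]; exact: (contr Esym Ecard wmono cM).
  move=> c Mc; apply/seteqP; split => x //= [Gx cx].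
  have := hb x Gx; lra.
move=> x Gx.
have -> : f x = Lw (fun z => f (bvec R n z)) x.
  case: Gx => [[z ->]|[i [j [eij [t [/andP [t0 t1] ->]]]]]]; first by rewrite Lw_e.
  have [a [b hab]] := flin i j eij.
  rewrite Lw_edge hab ?t0 ?t1 //.
  have ha : f (bvec R n i) = a by rewrite -(edge_pt0 R i j) hab ?lexx ?ler01 // mulr0 addr0.
  have hb : f (bvec R n j) = a + b by rewrite -(edge_pt1 R i j) hab ?lexx ?ler01 // mulr1.
  rewrite ha hb; ring.
rewrite /Lw.
under eq_bigr => z _ do rewrite (fsum _ (G_e R E z)) mulr_sumr.
by rewrite exchange_big.
Qed.
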